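(* Let $\gamma_0>-1$ and $\Theta=(-1,+\infty)\times\mathbb{R}\times(0,+\infty)$. For $B\subset\Theta$ define $\ell_B(x)=\sup_{\theta\in B}\ell_\theta(x)$, $x\in\mathbb{R}$. Let $\theta\in\Theta$ and let $B(\theta,\varepsilon)$ denote the open ball in $\Theta$ with center $\theta$ and radius $\varepsilon>0$. Then \[ \lim_{\varepsilon\to0}G_{\gamma_0}[\ell_{B(\theta,\varepsilon)}]=G_{\gamma_0}[\ell_\theta], \] where $G_{\gamma_0}[f]=\int f\,dG_{\gamma_0}$.
   Context: For $\gamma\in\mathbb{R}$, $G_\gamma$ denotes the generalized extreme value distribution with distribution function $F_\gamma(x)=\exp(-(1+\gamma x)^{-1/\gamma})$ for $1+\gamma x>0$ (interpreted as $\exp(-e^{-x})$ when $\gamma=0$). The GEV log-likelihood is $\ell_\gamma(x)=-(1+1/\gamma)\log(1+\gamma x)-(1+\gamma x)^{-1/\gamma}$ if $1+\gamma x>0$ and $-\infty$ otherwise, with $\ell_0(x)=-x-e^{-x}$; for $\theta=(\gamma,\mu,\sigma)$ with $\sigma>0$, $\ell_\theta(x)=\ell_\gamma\big(\frac{x-\mu}{\sigma}\big)-\log\sigma$. *)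

(* Defs.v *)
From HB Require Import structures.
From mathcomp Require Import all_boot all_order all_algebra.
From mathcomp Require Import all_classical all_reals all_analysis.
Set Implicit Arguments. Unset Strict Implicit. Unset Printing Implicit Defensive.
Import Order.TTheory GRing.Theory Num.Theory.
Local Open Scope ring_scope.
Local Open Scope classical_set_scope.

Section GEV.
Variable R : realType.

Definition gev_cdf (g x : R) : R :=
  if g == 0 then expR (- expR (- x))
  else if 0 < 1 + g * x then expR (- ((1 + g * x) `^ (- g^-1)))
  else if 0 < g then 0 else 1.

Definition gev_ll (g x : R) : \bar R :=
  if g == 0 then (- x - expR (- x))%:E
  else if 0 < 1 + g * x then
    (- (1 + g^-1) * ln (1 + g * x) - (1 + g * x) `^ (- g^-1))%:E
  else -oo%E.

(* theta = (gamma, mu, sigma) *)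
Definition gev_llt (t : R * R * R) (x : R) : \bar R :=
  (gev_ll t.1.1 ((x - t.1.2) / t.2) - (ln t.2)%:E)%E.

Definition Theta : set (R * R * R) :=
  [set t | -1 < t.1.1 /\ 0 < t.2].

Definition Theta_ball (t : R * R * R) (e : R) : set (R * R * R) :=
  [set s | Theta s /\
    (s.1.1 - t.1.1) ^+ 2 + (s.1.2 - t.1.2) ^+ 2 + (s.2 - t.2) ^+ 2 < e ^+ 2].

Definition gev_llB (B : set (R * R * R)) (x : R) : \bar R :=
  ereal_sup [set gev_llt t x | t in B].

End GEV.

(* Main.v *)
Require Import Defs.
From HB Require Import structures.
From mathcomp Require Import all_boot all_order all_algebra.
From mathcomp Require Import all_classical all_reals all_analysis.
From mathcomp Require Import measurable_realfun ring lra.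
Import Order.TTheory GRing.Theory Num.Theory.
Import numFieldNormedType.Exports.
Local Open Scope ring_scope.
Local Open Scope classical_set_scope.

Section Helpers.
Variable R : realType.
Implicit Types g y : R.

Definition Vf g y : R := if g == 0 then - y else - ln (1 + g * y) / g.
Definition hf g y : R := (1 + g) * Vf g y - expR (Vf g y).

Lemma gev_ll_h g y : 0 < 1 + g * y -> gev_ll g y = (hf g y)%:E.
Proof.
move=> z0; rewrite /gev_ll /hf /Vf; case: eqP => [->|/eqP g0].
  by rewrite addr0 mul1r.
rewrite z0 /powR gt_eqF //; congr EFin; congr (_ - _).
  by field.
by rewrite mulNr mulrC mulNr.
Qed.

Lemma gev_ll_neg g y : g != 0 -> 1 + g * y <= 0 -> gev_ll g y = -oo%E.
Proof. by move=> g0 z0; rewrite /gev_ll (negbTE g0) ltNge z0. Qed.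

Lemma expR_sq_bound (v : R) : - 2 <= v -> (1 + v / 2) ^+ 2 <= expR v.
Proof.
move=> hv; rewrite [in X in _ <= X](splitr v).
rewrite expRD expr2; apply: ler_pM.
- lra.
- lra.
- exact: expR_ge1Dx.
- exact: expR_ge1Dx.
Qed.

Lemma hf_le_V2 g (v : R) : - 2 <= v -> (1 + g) * v - expR v <= g * v - v ^+ 2 / 4 - 1.
Proof.
move=> hv; have := expR_sq_bound _ hv.
have -> : (1 + v / 2) ^+ 2 = 1 + v + v ^+ 2 / 4 by rewrite expr2; field.
lra.
Qed.

Lemma hf_le_V g (v : R) : -1 < g -> (1 + g) * v - expR v <= (1 + g) ^+ 2.
Proof.
move=> hg; have [v0|v0] := leP v 0.
  have := expR_gt0 v; have : (1 + g) * v <= 0 by nra.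
  have : 0 <= (1 + g) ^+ 2 by rewrite sqr_ge0.
  lra.
have := hf_le_V2 g v (ltW (lt_trans _ v0) : -2 <= v).
have : 0 <= (g - v / 2) ^+ 2 by rewrite sqr_ge0.
rewrite !expr2. nra.
Qed.

Lemma ln_bounds (u : R) : 1 / 2 <= 1 + u -> 0 <= u - ln (1 + u) <= 2 * u ^+ 2.
Proof.
move=> hu.
have u1 : -1 < u by lra.
have h1 := le_ln1Dx u1.
have w1 : -1 < - u / (1 + u).
  rewrite ltr_pdivlMr; lra.
have h2 := le_ln1Dx w1.
have e : 1 + - u / (1 + u) = (1 + u)^-1 by field; lra.
rewrite e lnV in h2; last by rewrite posrE; lra.
apply/andP; split; first lra.
have : u - ln (1 + u) <= u - u / (1 + u) by lra.
have -> : u - u / (1 + u) = u ^+ 2 / (1 + u) by field; lra.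
move=> h; apply: (le_trans h).
rewrite ler_pdivrMr; last lra.
have : 0 <= u ^+ 2 by rewrite sqr_ge0.
nra.
Qed.

Lemma Vf_approx g y : 1 / 2 <= 1 + g * y -> `|Vf g y + y| <= 2 * `|g| * y ^+ 2.
Proof.
move=> hz; rewrite /Vf; case: eqP => [->|/eqP g0].
  by rewrite addNr normr0 mulr0 mul0r.
have := ln_bounds _ hz; set D := _ - ln _ => /andP[D0 D1].
have -> : - ln (1 + g * y) / g + y = D / g by rewrite /D; field.
rewrite normrM normrV ?unitfE // (ger0_norm D0) ler_pdivrMr ?normr_gt0 //.
apply: (le_trans D1).
have -> : 2 * `|g| * y ^+ 2 * `|g| = 2 * (`|g| ^+ 2 * y ^+ 2) by rewrite expr2; ring.
by rewrite real_normK ?num_real // exprMn.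
Qed.

Lemma cvg_z (g y : R) :
  (1 + q.1 * q.2) @[q --> (g, y)] --> 1 + g * y.
Proof. by apply: cvgD; [exact: cvg_cst | apply: cvgM; [exact: cvg_fst | exact: cvg_snd]]. Qed.

Lemma Vf_cont g y : 0 < 1 + g * y -> Vf q.1 q.2 @[q --> (g, y)] --> Vf g y.
Proof.
move=> z0; rewrite {2}/Vf; case: eqP => [g0|/eqP g0].
  subst g.
  have hz : \forall q \near ((0:R), y), 1 / 2 < 1 + q.1 * q.2.
    by apply: (cvgr_gt _ (cvg_z 0 y)); rewrite mul0r addr0; lra.
  have h0 : (2 * `|q.1| * q.2 ^+ 2) @[q --> ((0:R), y)] --> (0:R).
    suff : (2 * `|q.1| * q.2 ^+ 2) @[q --> ((0:R), y)] --> 2 * `|(0:R)| * y ^+ 2.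
      by rewrite normr0 mulr0 mul0r.
    apply: cvgM; last by rewrite expr2; apply: cvgM; exact: cvg_snd.
    apply: cvgM; first exact: cvg_cst.
    apply: cvg_norm; exact: cvg_fst.
  apply: (@squeeze_cvgr _ _ _ _ (fun q => - q.2 - 2 * `|q.1| * q.2 ^+ 2)
     (fun q => - q.2 + 2 * `|q.1| * q.2 ^+ 2)).
  - near=> q.
    have hq1 : 1 / 2 < 1 + q.1 * q.2 by near: q.
    have := Vf_approx q.1 q.2 (ltW hq1).
    rewrite ler_norml; lra.
  - rewrite -[X in _ --> X]subr0; apply: cvgB; first exact: (cvgN cvg_snd).
    exact: h0.
  - rewrite -[X in _ --> X]addr0; apply: cvgD; first exact: (cvgN cvg_snd).
    exact: h0.
have hq : \forall q \near (g, y), q.1 != 0.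
  have : 0 < `|g| by rewrite normr_gt0.
  move/(cvgr_gt _ (cvg_norm (@cvg_fst _ _ (nbhs g) (nbhs y) _))).
  by apply: filterS => q; rewrite normr_gt0.
apply: cvg_trans; first (apply: near_eq_cvg; near=> q;
  have hq1 : q.1 != 0 by near: q).
  by rewrite /Vf (negbTE hq1).
apply: cvgM.
  by apply: cvgN; apply: cvg_comp (cvg_z g y) (continuous_ln z0).
by apply: cvgV => //; exact: cvg_fst.
Unshelve. all: by end_near.
Qed.

Lemma hf_cont g y : 0 < 1 + g * y -> hf q.1 q.2 @[q --> (g, y)] --> hf g y.
Proof.
move=> z0; apply: cvgB.
  apply: cvgM; last exact: Vf_cont.
  by apply: cvgD; [exact: cvg_cst | exact: cvg_fst].
apply: continuous_cvg; [exact: continuous_expR | exact: Vf_cont].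
Qed.

Definition yy (s : R * R * R) (x : R) := (x - s.1.2) / s.2.

Lemma cvg_g (t : R * R * R) : s.1.1 @[s --> t] --> t.1.1.
Proof. by apply: cvg_comp; apply: cvg_fst. Qed.

Lemma cvg_s (t : R * R * R) : s.2 @[s --> t] --> t.2.
Proof. exact: cvg_snd. Qed.

Lemma cvg_yy (t : R * R * R) x : 0 < t.2 -> yy s x @[s --> t] --> yy t x.
Proof.
move=> s0; apply: cvgM.
  apply: cvgB; first exact: cvg_cst.
  by apply: cvg_comp; [exact: cvg_fst | exact: cvg_snd].
by apply: cvgV; [rewrite gt_eqF | exact: cvg_snd].
Qed.

Lemma cvg_pair_t (t : R * R * R) x : 0 < t.2 ->
  (s.1.1, yy s x) @[s --> t] --> (t.1.1, yy t x).
Proof. by move=> s0; apply: (@cvg_pair _ _ _ _ (nbhs t.1.1) (nbhs (yy t x))); [exact: cvg_g | exact: cvg_yy]. Qed.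

Lemma cvg_zt (t : R * R * R) x : 0 < t.2 ->
  (1 + s.1.1 * yy s x) @[s --> t] --> 1 + t.1.1 * yy t x.
Proof. by move=> s0; exact: (cvg_comp _ _ (cvg_pair_t _ x s0) (cvg_z t.1.1 (yy t x))). Qed.

Lemma cvg_llt (t : R * R * R) x : 0 < t.2 -> 0 < 1 + t.1.1 * yy t x ->
  (hf s.1.1 (yy s x) - ln s.2) @[s --> t] --> hf t.1.1 (yy t x) - ln t.2.
Proof.
move=> s0 z0; apply: cvgB.
  exact: (cvg_comp _ _ (cvg_pair_t _ x s0) (hf_cont _ _ z0)).
exact: (cvg_comp _ _ (cvg_s t) (continuous_ln s0)).
Qed.

Lemma bnd_pos (g G V w N : R) : 0 < g -> g <= G -> 1 <= N -> V * g = w ->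
  G * (4 * G + 4 * N) <= w -> (1 + g) * V - expR V <= - N - 1.
Proof.
move=> g0 gG N1 Vw wK.
have hw : g * (4 * G + 4 * N) <= g * V.
  have : g * (4 * G + 4 * N) <= G * (4 * G + 4 * N).
    by rewrite ler_pM2r //; lra.
  move=> h; rewrite [g * V]mulrC; lra.
rewrite ler_pM2l // in hw.
have V1 : 1 <= V by lra.
have := hf_le_V2 g V (_ : -2 <= V).
have h1 : 0 <= V * (V - 4 * g - 4 * N) by apply: mulr_ge0; lra.
have h2 : N <= N * V by rewrite ler_peMr //; lra.
move=> /(_ ltac:(lra)); nra.
Qed.

Lemma bnd_neg (g c V w N : R) : -1 < g -> g < 0 -> 0 < c -> c <= 1 + g ->
  V * g = w -> 0 < w -> N <= c * w -> (1 + g) * V - expR V <= - N.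
Proof.
move=> g1 g0 c0 cg Vw w0 Nw.
have V0 : V < 0 by nra.
have Vw' : V <= - w by nra.
have := expR_gt0 V.
have : (1 + g) * V <= c * V by nra.
nra.
Qed.

Lemma near_neq0 (T : Type) (F : set_system T) (FF : Filter F) (f : T -> R) (a : R) :
  f s @[s --> F] --> a -> a != 0 -> \forall s \near F, f s != 0.
Proof.
move=> fa a0; have : 0 < `|a| by rewrite normr_gt0.
move/(cvgr_gt _ (cvg_norm fa)).
by apply: filterS => q; rewrite normr_gt0.
Qed.

Lemma fin_bound (M a b N : R) : N = `|M| + `|a| + 1 -> a < b -> - N - b < M.
Proof.
move=> ->; have := ler_norm (- M); have := ler_norm (- a); rewrite !normrN; lra.
Qed.

Lemma llt_usc (t : R * R * R) x (M : R) : Theta t ->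
  (gev_llt t x < M%:E)%E -> \forall s \near t, (gev_llt s x < M%:E)%E.
Proof.
rewrite /Theta /= => -[g1 s0] hM.
have ez := cvg_zt _ x s0.
have eg := cvg_g t; have es := cvg_s t.
set z := (1 + t.1.1 * yy t x)%R in ez.
have gn0 : (z <= 0)%R -> t.1.1 != 0.
  by move=> hz; apply/eqP => g0; move: hz; rewrite /z g0 mul0r addr0; lra.
have [zn|zp|ze] := ltgtP z 0.
- have gn := gn0 (ltW zn).
  near=> s.
  have hs1 : s.1.1 != 0 by near: s; exact: near_neq0 eg gn.
  have hs2 : (1 + s.1.1 * yy s x < 0)%R by near: s; exact: cvgr_lt ez _ zn.
  by rewrite /gev_llt gev_ll_neg // ?ltW // addNye ltNyr.
- have hM' : (hf t.1.1 (yy t x) - ln t.2 < M)%R.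
    by move: hM; rewrite /gev_llt gev_ll_h // -EFinB lte_fin.
  near=> s.
  have hz : (0 < 1 + s.1.1 * yy s x)%R by near: s; exact: cvgr_gt ez _ zp.
  have hl : (hf s.1.1 (yy s x) - ln s.2 < M)%R.
    by near: s; exact: cvgr_lt (cvg_llt _ x s0 zp) _ hM'.
  by rewrite /gev_llt gev_ll_h // -EFinB lte_fin.
have gn : t.1.1 != 0 by apply: gn0; rewrite ze.
set N := `|M| + `|ln (t.2 / 2)| + 1.
have N1 : 1 <= N by rewrite /N; have := normr_ge0 M; have := normr_ge0 (ln (t.2 / 2)); lra.
have s2 : t.2 / 2 < t.2 by lra.
have hs2 : \forall s \near t, t.2 / 2 < s.2 by exact: cvgr_gt es _ s2.
have fin (s : R * R * R) : t.2 / 2 < s.2 ->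
    0 < 1 + s.1.1 * yy s x -> hf s.1.1 (yy s x) <= - N - 1 ->
    (gev_llt s x < M%:E)%E.
  move=> hs hz hb; rewrite /gev_llt gev_ll_h // -EFinB lte_fin.
  have hl : ln (t.2 / 2) < ln s.2 by rewrite ltr_ln // posrE; lra.
  have := fin_bound M (ln (t.2 / 2)) (ln s.2) N (erefl N) hl.
  lra.
have [gp|gneg] := ltP 0 t.1.1.
  set G := 2 * t.1.1; set K := G * (4 * G + 4 * N).
  have eta0 : z < expR (- K) by rewrite ze expR_gt0.
  near=> s.
  have hsz : 1 + s.1.1 * yy s x < expR (- K) by near: s; exact: cvgr_lt ez _ eta0.
  have hg0 : 0 < s.1.1 by near: s; exact: cvgr_gt eg _ gp.
  have hgG : s.1.1 < G by near: s; apply: cvgr_lt eg _ _; rewrite /G; lra.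
  have hs : t.2 / 2 < s.2 by near: s; exact: hs2.
  have [zs|zs] := leP (1 + s.1.1 * yy s x) 0.
    by rewrite /gev_llt gev_ll_neg ?gt_eqF // addNye ltNyr.
  apply: fin => //.
  have Vw : Vf s.1.1 (yy s x) * s.1.1 = - ln (1 + s.1.1 * yy s x).
    by rewrite /Vf (gt_eqF hg0); field; rewrite gt_eqF.
  have hw : K <= - ln (1 + s.1.1 * yy s x).
    have : ln (1 + s.1.1 * yy s x) < ln (expR (- K)) by rewrite ltr_ln // posrE expR_gt0.
    rewrite expRK; lra.
  by rewrite /hf; apply: (bnd_pos _ _ _ _ _ hg0 (ltW hgG) N1 Vw hw).
have gl : t.1.1 < 0 by rewrite lt_neqAle gn gneg.
set c := (1 + t.1.1) / 2; set K := (N + 1) / c.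
have c0 : 0 < c by rewrite /c; lra.
have cK : c * K = N + 1 by rewrite /K; field; rewrite gt_eqF.
have eta0 : z < expR (- K) by rewrite ze expR_gt0.
near=> s.
have hsz : 1 + s.1.1 * yy s x < expR (- K) by near: s; exact: cvgr_lt ez _ eta0.
have hg1 : (t.1.1 - 1) / 2 < s.1.1 by near: s; apply: cvgr_gt eg _ _; lra.
have hg2 : s.1.1 < t.1.1 / 2 by near: s; apply: cvgr_lt eg _ _; lra.
have hs : t.2 / 2 < s.2 by near: s; exact: hs2.
have hgn : s.1.1 < 0 by lra.
have [zs|zs] := leP (1 + s.1.1 * yy s x) 0.
  by rewrite /gev_llt gev_ll_neg ?lt_eqF // addNye ltNyr.
apply: fin => //.
have Vw : Vf s.1.1 (yy s x) * s.1.1 = - ln (1 + s.1.1 * yy s x).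
  by rewrite /Vf (lt_eqF hgn); field; rewrite lt_eqF.
have hw : K < - ln (1 + s.1.1 * yy s x).
  have : ln (1 + s.1.1 * yy s x) < ln (expR (- K)) by rewrite ltr_ln // posrE expR_gt0.
  rewrite expRK; lra.
have K0 : 0 < K by rewrite /K divr_gt0 //; lra.
have hNw : N + 1 <= c * - ln (1 + s.1.1 * yy s x).
  by rewrite -cK ler_pM2l //; lra.
have hg1' : -1 < s.1.1 by lra.
have hc : c <= 1 + s.1.1 by rewrite /c; lra.
have hw0 : 0 < - ln (1 + s.1.1 * yy s x) by lra.
have := bnd_neg _ _ _ _ _ hg1' hgn c0 hc Vw hw0 hNw.
by rewrite /hf opprD.
Unshelve. all: by end_near.
Qed.

Lemma llt_bound (s : R * R * R) x (G sg : R) : Theta s -> s.1.1 <= G -> 0 < sg ->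
  sg <= s.2 -> (gev_llt s x <= ((1 + G) ^+ 2 - ln sg)%:E)%E.
Proof.
rewrite /Theta /= => -[g1 s0] gG sg0 sgs.
have hl : ln sg <= ln s.2 by rewrite ler_ln // posrE.
have [zs|zs] := ltP 0 (1 + s.1.1 * yy s x).
  rewrite /gev_llt gev_ll_h // -EFinB lee_fin.
  have := hf_le_V s.1.1 (Vf s.1.1 (yy s x)) g1.
  have : (1 + s.1.1) ^+ 2 <= (1 + G) ^+ 2.
    by rewrite ler_sqr ?nnegrE; lra.
  rewrite /hf; lra.
have g0 : s.1.1 != 0.
  by apply/eqP => g0; move: zs; rewrite g0 mul0r addr0; lra.
by rewrite /gev_llt gev_ll_neg // addNye leNye.
Qed.

Lemma llt_lsc (s : R * R * R) : 0 < s.2 -> lower_semicontinuous (gev_llt s).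
Proof.
move=> s0 x a ha.
have zs : 0 < 1 + s.1.1 * yy s x.
  rewrite ltNge; apply/negP => zs.
  have g0 : s.1.1 != 0.
    by apply/eqP => g0; move: zs; rewrite g0 mul0r addr0; lra.
  by move: ha; rewrite /gev_llt gev_ll_neg // addNye ltNge leNye.
have ey : yy s x' @[x' --> x] --> yy s x.
  apply: cvgM; last exact: cvg_cst.
  by apply: cvgB; [exact: cvg_id | exact: cvg_cst].
have ep : (s.1.1, yy s x') @[x' --> x] --> (s.1.1, yy s x).
  by apply: (@cvg_pair _ _ _ _ (nbhs s.1.1) (nbhs (yy s x))); [exact: cvg_cst | exact: ey].
have ez : (1 + s.1.1 * yy s x') @[x' --> x] --> 1 + s.1.1 * yy s x.
  exact: (cvg_comp _ _ ep (cvg_z _ _)).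
have el : (hf s.1.1 (yy s x') - ln s.2) @[x' --> x] --> hf s.1.1 (yy s x) - ln s.2.
  apply: cvgB; last exact: cvg_cst.
  exact: (cvg_comp _ _ ep (hf_cont _ _ zs)).
have ha' : a < hf s.1.1 (yy s x) - ln s.2.
  by move: ha; rewrite /gev_llt gev_ll_h // -EFinB lte_fin.
exists [set x' | 0 < 1 + s.1.1 * yy s x' /\ a < hf s.1.1 (yy s x') - ln s.2].
  near=> x'; split.
    by near: x'; exact: cvgr_gt ez _ zs.
  by near: x'; exact: cvgr_gt el _ ha'.
by move=> x' [h1 h2]; rewrite /gev_llt gev_ll_h // -EFinB lte_fin.
Unshelve. all: by end_near.
Qed.

Lemma llB_lsc (B : set (R * R * R)) : B `<=` @Theta R -> lower_semicontinuous (gev_llB B).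
Proof.
move=> BT x a /ereal_sup_gt [_ [s Bs <-]] ha.
have [_ s0] := BT s Bs.
have [V xV HV] := llt_lsc _ s0 _ _ ha.
exists V => // y /HV h; apply: (lt_le_trans h).
by apply: ereal_sup_ubound; exists s.
Qed.

Local Open Scope ereal_scope.

Lemma int_sub (P : probability R R) (f : R -> \bar R) (C : R) : (0 <= C)%R ->
  measurable_fun setT f -> (forall x, f x <= C%:E) ->
  \int[P]_x f x = C%:E - \int[P]_x (C%:E - f x).
Proof.
move=> C0 mf fC.
have fpC x : f^\+ x <= C%:E by rewrite funeposE ge_max fC lee_fin.
have fp0 x : 0 <= f^\+ x by exact: funepos_ge0.
have eq1 : (fun x => C%:E - f x) = (fun x => (C%:E - f^\+ x) + f^\- x).
  apply/funext => x; rewrite funeposE funenegE.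
  have := fC x; case: (f x) => [r| |] //=.
    move=> _; have [r0|r0] := leP 0%R r.
      rewrite max_l ?lee_fin // max_r ?lee_fin ?oppr_le0 // adde0 //.
    rewrite max_r ?lee_fin ?ltW // max_l ?lee_fin ?oppr_ge0 ?ltW // sube0.
    by [].
  by move=> _; rewrite max_r ?leNye // max_l ?leey // sube0.
have mfp : measurable_fun setT f^\+ by exact: measurable_funepos.
have mfn : measurable_fun setT f^\- by exact: measurable_funeneg.
rewrite eq1 ge0_integralD //; last first. all: try (by move=> x _; exact: funeneg_ge0). all: try (by apply: emeasurable_funB => //; exact: measurable_cst). all: try (by move=> x _; rewrite sube_ge0 ?fpC // orbT).
have iC : P.-integrable setT (fun _ => C%:E) by exact: (finite_measure_integrable_cst _ C measurableT).
have ifp : P.-integrable setT f^\+.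
  apply: (le_integrable measurableT mfp _ iC) => x _.
  by rewrite gee0_abs // gee0_abs ?lee_fin //.
rewrite (@integralB _ _ _ P setT measurableT (fun _ => C%:E) f^\+ iC ifp).
rewrite integral_cst //. set X := (X in C%:E * X). have -> : X = 1 by exact: probability_setT. rewrite mule1.
rewrite [in LHS]integralE.
have : \int[P]_x f^\+ x \is a fin_num by exact: integrable_fin_num.
have : 0 <= \int[P]_x f^\- x by apply: integral_ge0 => x _; exact: funeneg_ge0.
case: (\int[P]_x f^\- x) => [b| |] //; case: (\int[P]_x f^\+ x) => [a| |] //= _ _.
  by rewrite -!EFinD; congr EFin; ring.
Qed.

Lemma abs_lt_sq (a e : R) : (0 < e)%R -> (a ^+ 2 < e ^+ 2)%R -> (`|a| < e)%R.
Proof.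
move=> e0 h; rewrite -ltr_sqr ?nnegrE ?normr_ge0 ?ltW //.
by rewrite real_normK ?num_real.
Qed.

Lemma ball_small (t s : R * R * R) e : (0 < e)%R -> Theta_ball t e s ->
  [/\ (`|s.1.1 - t.1.1| < e)%R, (`|s.1.2 - t.1.2| < e)%R & (`|s.2 - t.2| < e)%R].
Proof.
move=> e0 [_ h].
have h1 := sqr_ge0 (s.1.1 - t.1.1); have h2 := sqr_ge0 (s.1.2 - t.1.2).
have h3 := sqr_ge0 (s.2 - t.2).
split; apply: abs_lt_sq => //; lra.
Qed.

Lemma near_ball (t : R * R * R) (Q : set (R * R * R)) : (\forall s \near t, Q s) ->
  exists2 d : R, (0 < d)%R & forall s, Theta_ball t d s -> Q s.
Proof.
move=> /nbhs_ballP [d d0 H]; exists d => // s hs.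
have [h1 h2 h3] := ball_small _ _ _ d0 hs.
apply: H; rewrite /ball /= /prod_ball /ball /= /prod_ball /ball /=.
rewrite !(distrC t.1.1) !(distrC t.1.2) !(distrC t.2); tauto.
Qed.

Lemma le_via (a b : \bar R) : (forall r : R, b < r%:E -> a <= r%:E) -> a <= b.
Proof.
case: b => [b| |] h.
- case: a h => [a| |] h.
  + rewrite lee_fin; apply/ler_addgt0Pr => e e0.
    by have := h (b + e)%R; rewrite !lte_fin lee_fin; apply; lra.
  + by have := h (b + 1)%R; rewrite lte_fin leNgt ltry; apply; lra.
  + by rewrite leNye.
- by rewrite leey.
- by rewrite (eq_ninfty (fun r => h r (ltNyr r))).
Qed.

Lemma main_lemma (P : probability R R) (t : R * R * R) : Theta t ->
  (fun e : R => \int[P]_x gev_llB (Theta_ball t e) x) @ 0%R^'+ -->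
    \int[P]_x gev_llt t x.
Proof.
move=> Tt; have [g1 s0] : (-1 < t.1.1)%R /\ (0 < t.2)%R := Tt.
set e0 := (t.2 / 2)%R.
have e0E : e0 = (t.2 / 2)%R by [].
have e00 : (0 < e0)%R by rewrite /e0; lra.
set G := (t.1.1 + e0)%R.
set C := ((1 + G) ^+ 2 + `|ln (t.2 / 2)|)%R.
have C0 : (0 <= C)%R by rewrite /C; have := sqr_ge0 (1 + G); have := normr_ge0 (ln (t.2 / 2)); lra.
have Tb e : Theta_ball t e `<=` @Theta R by move=> s [].
have tin e : (0 < e)%R -> Theta_ball t e t.
  move=> e0'; split => //; rewrite !subrr expr0n /= !addr0; exact: exprn_gt0.
have bsub e e' : (0 < e)%R -> (e <= e')%R -> Theta_ball t e `<=` Theta_ball t e'.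
  move=> ep ee s [Ts hs]; split => //; apply: (lt_le_trans hs).
  by rewrite ler_sqr ?nnegrE; lra.
have bnd e x : (0 < e)%R -> (e <= e0)%R -> gev_llB (Theta_ball t e) x <= C%:E.
  move=> ep ee; apply: ge_ereal_sup => _ [s hs <-].
  have [h1 h2 h3] := ball_small _ _ _ ep hs.
  have hG : (s.1.1 <= G)%R by have := ler_norm (s.1.1 - t.1.1); rewrite /G; lra.
  have ee' : (e <= t.2 / 2)%R by rewrite -e0E.
  have hsg : (t.2 / 2 <= s.2)%R.
    by have := ler_norm (- (s.2 - t.2)); rewrite normrN; lra.
  apply: (le_trans (llt_bound s x G (t.2 / 2) (Tb _ _ hs) hG (_ : 0 < t.2 / 2)%R hsg)).
    by lra.
  by rewrite lee_fin /C; have := ler_norm (- ln (t.2 / 2)); rewrite normrN; lra.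
have ge_t e x : (0 < e)%R -> gev_llt t x <= gev_llB (Theta_ball t e) x.
  by move=> ep; apply: ereal_sup_ubound; exists t => //; exact: tin.
have bndt x : gev_llt t x <= C%:E := le_trans (ge_t e0 x e00) (bnd e0 x e00 (lexx _)).
have mono e e' x : (0 < e)%R -> (e <= e')%R ->
    gev_llB (Theta_ball t e) x <= gev_llB (Theta_ball t e') x.
  move=> ep ee; apply: ereal_sup_le => _ [s hs <-]; exists s => //.
  exact: bsub hs.
have mB e : measurable_fun setT (gev_llB (Theta_ball t e)).
  exact: lower_semicontinuous_measurable (llB_lsc _ (Tb e)).
have mt : measurable_fun setT (gev_llt t).
  exact: lower_semicontinuous_measurable (llt_lsc _ s0).
have IE e : (0 < e)%R -> (e <= e0)%R -> \int[P]_x gev_llB (Theta_ball t e) x =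
    C%:E - \int[P]_x (C%:E - gev_llB (Theta_ball t e) x).
  by move=> ep ee; apply: int_sub => // x; exact: bnd.
have LE : \int[P]_x gev_llt t x = C%:E - \int[P]_x (C%:E - gev_llt t x).
  by apply: int_sub.
pose I e := \int[P]_x gev_llB (Theta_ball t e) x.
pose J e := \int[P]_x (C%:E - gev_llB (Theta_ball t e) x).
pose JL := \int[P]_x (C%:E - gev_llt t x).
have J_anti e e' : (0 < e)%R -> (e <= e')%R -> (e' <= e0)%R -> J e' <= J e.
  move=> ep ee ee0; apply: ge0_le_integral => //.
  - by move=> x _; rewrite sube_ge0 ?bnd ?orbT //; lra.
  - by apply: emeasurable_funB => //; exact: measurable_cst.
  - by apply: emeasurable_funB => //; exact: measurable_cst.
  - by move=> x _; apply: leeB => //; exact: mono.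
have h : I x @[x --> 0%R^'+] --> ereal_inf [set I x | x in [set` Interval (BRight 0%R) (BLeft e0)]].
  apply: nondecreasing_at_right_cvge; first by rewrite bnd_simp.
  move=> a b; rewrite !in_itv /= => /andP[a0 ae] /andP[b0 be] ab.
  rewrite /I (IE a a0 (ltW ae)) (IE b b0 (ltW be)).
  by apply: leeB => //; apply: J_anti => //; exact: ltW.
suff E : ereal_inf [set I x | x in [set` Interval (BRight 0%R) (BLeft e0)]] =
    \int[P]_x gev_llt t x by rewrite -E; exact: h.
pose e_ n := (e0 / (n.+2)%:R)%R.
have e_pos n : (0 < e_ n)%R by rewrite /e_ divr_gt0.
have e_lt n : (e_ n < e0)%R.
  rewrite /e_ ltr_pdivrMr ?ltr0n // -[X in (X < _)%R]mulr1 ltr_pM2l //.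
  by rewrite ltr1n.
have e_mono n m : (n <= m)%N -> (e_ m <= e_ n)%R.
  move=> nm; rewrite /e_ ler_pM2l // lef_pV2 ?posrE ?ltr0n // ler_nat.
  by rewrite ltnS ltnS.
have e_small d : (0 < d)%R -> exists n, (e_ n <= d)%R.
  move=> d0; exists (Num.Def.trunc (e0 / d)).
  have := truncnS_gt (e0 / d); set k := Num.Def.trunc _ => hk.
  rewrite /e_ ler_pdivrMr ?ltr0n // -ler_pdivrMl //.
  rewrite mulrC; apply: ltW; apply: (lt_le_trans hk).
  by rewrite ler_nat.
have conv x : gev_llB (Theta_ball t (e_ n)) x @[n --> \oo] --> gev_llt t x.
  pose u n := gev_llB (Theta_ball t (e_ n)) x.
  have nd : {homo u : n m / (n <= m)%N >-> (m <= n)%E}.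
    by move=> n m nm; apply: mono => //; exact: e_mono.
  have := ereal_nonincreasing_cvgn nd.
  suff -> : ereal_inf (range u) = gev_llt t x by [].
  apply/eqP; rewrite eq_le; apply/andP; split.
  - apply: le_via => r hr.
    have [d d0 hd] := near_ball _ _ (llt_usc _ _ _ Tt hr).
    have [n hn] := e_small d d0.
    apply: ge_ereal_inf; exists (u n); first by exists n.
    apply: ge_ereal_sup => _ [s hs <-]; apply: ltW; apply: hd.
    exact: (bsub _ _ (e_pos n) hn _ hs).
  - by apply: le_ereal_inf_tmp => _ [n _ <-]; exact: ge_t.
pose g' n x := C%:E - gev_llB (Theta_ball t (e_ n)) x.
have mg n : measurable_fun setT (g' n).
  by apply: emeasurable_funB => //; exact: measurable_cst.
have g0 n x : setT x -> 0 <= g' n x.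
  by move=> _; rewrite /g' sube_ge0 ?orbT // bnd // ltW.
have ndg x : setT x -> {homo g'^~ x : n m / (n <= m)%N >-> n <= m}.
  by move=> _ n m nm; rewrite /g'; apply: leeB => //; apply: mono => //; exact: e_mono.
have mct := cvg_monotone_convergence (mu := P) measurableT mg g0 ndg.
have lim_eq : (fun x => limn (g'^~ x)) = fun x => C%:E - gev_llt t x.
  apply/funext => x; apply: cvg_lim => //; apply: cvgeB.
  - exact: fin_num_adde_defr.
  - exact: cvg_cst.
  - exact: conv.
rewrite lim_eq in mct.
have convI : I (e_ n) @[n --> \oo] --> \int[P]_x gev_llt t x.
  rewrite LE; have -> : (fun n => I (e_ n)) = fun n => C%:E - \int[P]_x g' n x.
    by apply/funext => n; rewrite /I (IE _ (e_pos n) (ltW (e_lt n))).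
  apply: cvgeB; [exact: fin_num_adde_defr | exact: cvg_cst | exact: mct].
apply/eqP; rewrite eq_le; apply/andP; split.
- rewrite -(cvg_lim _ convI) //; apply: lime_ge.
    by apply/cvg_ex; eexists; exact: convI.
  apply: nearW => n; apply: ge_ereal_inf; exists (I (e_ n)) => //.
  by exists (e_ n) => //=; rewrite in_itv /= e_pos e_lt.
- apply: le_ereal_inf_tmp => _ [e he <-].
  move: he; rewrite /= in_itv /= => /andP[ep ee].
  rewrite /I (IE e ep (ltW ee)) LE; apply: leeB => //.
  apply: ge0_le_integral => //.
  + by move=> x _; rewrite sube_ge0 ?orbT // bnd // ltW.
  + by apply: emeasurable_funB => //; exact: measurable_cst.
  + by apply: emeasurable_funB => //; exact: measurable_cst.
  + by move=> x _; apply: leeB => //; exact: ge_t.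
Qed.

End Helpers.

Local Open Scope ring_scope.
Local Open Scope classical_set_scope.
Local Open Scope ereal_scope.

Theorem lemma3p2 (R : realType) (P : probability R R) (g0 : R)
  (hP : forall x : R, P `]-oo, x] = (gev_cdf g0 x)%:E)
  (hg0 : (-1 < g0)%R) (t : R * R * R) (ht : Theta t) :
  (fun e : R => \int[P]_x gev_llB (Theta_ball t e) x) @ 0%R^'+ -->
    \int[P]_x gev_llt t x.
Proof.
exact: (@main_lemma R P t ht).
Qed.
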